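(* Let $(a_p)_{p\in\mathbb{Z}}$ be a strictly positive rapidly decreasing sequence with $a_p=a_{-p}$ for all $p$ and $(a_p/a_{p+1})$ bounded, and let $H$ be the associated Hilbert space completion of $L^*\mathbb{C}^n\cong\mathcal{S}^*\otimes\mathbb{C}^n$. Then the polynomial loop group $L_{\mathrm{pol}}U_n$ acts continuously on $H$ and preserves the standard polarisation; that is, the image of $L_{\mathrm{pol}}U_n$ in the bounded operators on $H$ lies in $\mathrm{GL}_{\mathcal{J}}(H)$.
   Context: $\mathcal{S}^*$ is the dual of the space of rapidly decreasing complex $\mathbb{Z}$-indexed sequences, identified with $L^*\mathbb{C}$ (distributions on $S^1$) via Fourier coefficients, with basis elements $e_p$. The inner product on $\mathcal{S}^*$ is $\langle b,c\rangle=\sum_pb^p\overline{c^p}a_p$, tensored with the standard inner product of $\mathbb{C}^n$. The operator $z$ acts by $ze_p=e_{p-1}$; a polynomial loop $\sum_q z^qA_q\in L_{\mathrm{pol}}U_n$ ($A_q\in M_n(\mathbb{C})$) acts by $\sum_q z^q\otimes A_q$. Let $J$ on $\mathcal{S}^*$ be $Je_p=-(-1)^{\mathrm{sign}(p)}ie_p$, extended to $H$ as $J\otimes I_n$. A polarising operator on a complex Hilbert space is a bounded $J$ with $J^2+I$ trace class and $J\pm iI$ not of finite rank; a polarisation is an equivalence class of polarising operators modulo Hilbert–Schmidt differences; the standard polarisation $\mathcal{J}$ on $H$ is the class of $J\otimes I_n$. $\mathrm{GL}_{\mathcal{J}}(H)$ is the group of invertible bounded operators $A$ with $[A,J]$ Hilbert–Schmidt.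 *)

(* Defs.v *)
From HB Require Import structures.
From mathcomp Require Import all_boot all_order all_algebra.
From mathcomp Require Import all_classical all_reals all_analysis.
From mathcomp Require Import complex.
Set Implicit Arguments. Unset Strict Implicit. Unset Printing Implicit Defensive.
Import Order.TTheory GRing.Theory Num.Theory.
Local Open Scope ring_scope.
Local Open Scope classical_set_scope.

Section Defs.
Variable R : realType.
Local Notation C := (R[i]).

(* Elements of S^* ⊗ C^n: Z-indexed sequences b = sum_p e_p ⊗ b_p, b_p in C^n. *)
Definition seqH (n : nat) := int -> 'cV[C]_n.

Definition csq (z : C) : R := (complex.Re z) ^+ 2 + (complex.Im z) ^+ 2.
Definition vsq n (v : 'cV[C]_n) : R := \sum_(j < n) csq (v j 0).

Definition wnorm2 n (a : int -> R) (b : seqH n) : \bar R :=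
  (\esum_(p in [set: int]) (a p * vsq (b p))%:E)%E.

(* b belongs to the Hilbert space completion H *)
Definition inH n (a : int -> R) (b : seqH n) : Prop := (wnorm2 a b < +oo)%E.

Definition bounded_op n (a : int -> R) (T : seqH n -> seqH n) : Prop :=
  exists M : R, forall b, inH a b -> (wnorm2 a (T b) <= M%:E * wnorm2 a b)%E.

Definition ebasis n (p : int) (j : 'I_n) : seqH n :=
  fun q => if q == p then \col_(k < n) (if k == j then 1 else 0) else 0.

(* Hilbert-Schmidt: sum over the orthonormal basis (e_p ⊗ eps_j)/sqrt(a_p) of ||K f||^2 finite *)
Definition hilbert_schmidt n (a : int -> R) (K : seqH n -> seqH n) : Prop :=
  (\esum_(x in [set: int * 'I_n]) ((a x.1)^-1)%:E * wnorm2 a (K (ebasis x.1 x.2)) < +oo)%E.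

Definition Jop n (b : seqH n) : seqH n :=
  fun p => (if 0 < p then 'i else - 'i) *: b p.

Definition commJ n (T : seqH n -> seqH n) (b : seqH n) : seqH n :=
  fun p => T (Jop b) p - Jop (T b) p.

Definition in_GL_J n (a : int -> R) (T : seqH n -> seqH n) : Prop :=
  [/\ bounded_op a T,
      exists S : seqH n -> seqH n, bounded_op a S /\
        (forall b, inH a b -> S (T b) = b /\ T (S b) = b)
    & hilbert_schmidt a (commJ T)].

Definition loop_eval n (N : nat) (A : int -> 'M[C]_n) (z : C) : 'M[C]_n :=
  \sum_(k < N.*2.+1) (z ^ (k%:Z - N%:Z)) *: A (k%:Z - N%:Z).

Definition unitary_mx n (M : 'M[C]_n) : Prop := M *m (map_mx Num.conj M)^T = 1%:M.

(* A is (the coefficient family of) an element of L_pol U_n supported in [-N, N] *)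
Definition in_LpolU n (N : nat) (A : int -> 'M[C]_n) : Prop :=
  (forall q : int, (N < `|q|)%N -> A q = 0) /\
  (forall z : C, `|z| = 1 -> unitary_mx (loop_eval N A z)).

(* action of sum_q z^q ⊗ A_q, with z e_p = e_{p-1}: (γ b)_p = sum_q A_q b_{p+q} *)
Definition loop_act n (N : nat) (A : int -> 'M[C]_n) (b : seqH n) : seqH n :=
  fun p => \sum_(k < N.*2.+1) A (k%:Z - N%:Z) *m b (p + (k%:Z - N%:Z)).

Definition admissible_weight (a : int -> R) : Prop :=
  [/\ forall p, 0 < a p,
      forall p, a p = a (- p),
      forall k : nat, exists M : R, forall p : int, a p * (`|p|%N%:R) ^+ k <= M
    & exists M : R, forall p : int, a p / a (p + 1) <= M].

End Defs.

(* Main.v *)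
Require Import Defs.
From HB Require Import structures.
From mathcomp Require Import all_boot all_order all_algebra.
From mathcomp Require Import all_classical all_reals all_analysis.
From mathcomp Require Import complex.
Import Order.TTheory GRing.Theory Num.Theory.
Local Open Scope ring_scope.
From mathcomp Require Import zify ring lra.

Section Alg.
Variable R : realType.
Local Notation C := (R[i]).

Lemma part_sum (V : zmodType) (K : nat) (H : nat -> 'I_K -> 'I_K -> V) :
  \sum_(m < K.*2) \sum_(k < K) \sum_(l < K) (if m == (k + l)%N :> nat then H m k l else 0)
  = \sum_(k < K) \sum_(l < K) H (k + l)%N k l.
Proof.
rewrite exchange_big; apply: eq_bigr => k _.
rewrite exchange_big; apply: eq_bigr => l _.
rewrite -big_mkcond /= (big_ord1_eq _ (fun j => H j k l)).
have -> : (k + l < K.*2)%N by rewrite -addnn; have := ltn_ord k; have := ltn_ord l; lia.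
done.
Qed.

Lemma loop_prod n N (Y X : int -> 'M[C]_n) (z : C) : z != 0 ->
  z ^+ N.*2 *: (loop_eval N Y z *m loop_eval N X z) =
  \sum_(k < N.*2.+1) \sum_(l < N.*2.+1)
     z ^+ (k + l)%N *: (Y (k%:Z - N%:Z) *m X (l%:Z - N%:Z)).
Proof.
move=> z0; rewrite /loop_eval mulmx_suml scaler_sumr; apply: eq_bigr => k _.
rewrite mulmx_sumr scaler_sumr; apply: eq_bigr => l _.
rewrite -scalemxAl -scalemxAr !scalerA; congr (_ *: _).
rewrite -[z ^+ N.*2]/(z ^ (Posz N.*2)) -[z ^+ (k + l)%N]/(z ^ (Posz (k+l)%N)) -!expfzDr //; congr (z ^ _).
move: (nat_of_ord k) (nat_of_ord l) => x y; rewrite -addnn !PoszD; lia.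
Qed.
End Alg.
Section Alg2.
Variable R : realType.
Local Notation C := (R[i]).

Definition zt (t : nat) : C := (1 + t%:R * 'i) / (1 - t%:R * 'i).

Lemma conj_w (t : nat) : (1 + t%:R * 'i : C)^* = 1 - t%:R * 'i.
Proof. rewrite rmorphD rmorph1 rmorphM rmorph_nat -mulrN; congr (_ + _ * _); exact: conjCi. Qed.

Lemma w_neq0 (t : nat) : (1 - t%:R * 'i : C) != 0.
Proof.
apply/negP => /eqP h.
have : (1 + t%:R * 'i) * (1 - t%:R * 'i) = (1 + t ^ 2)%N%:R :> C.
  apply/eqP; rewrite -subr_eq0; apply/eqP.
  have -> : (1 + t%:R * 'i) * (1 - t%:R * 'i) - (1 + t ^ 2)%N%:R = - (t%:R ^+ 2) * ('i ^+ 2 + 1) :> C.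
    by rewrite natrD natrX; ring.
  by rewrite sqrCi addNr mulr0.
by rewrite h mulr0 => /eqP; rewrite eq_sym pnatr_eq0.
Qed.

Lemma wp_neq0 (t : nat) : (1 + t%:R * 'i : C) != 0.
Proof. by rewrite -(conjC_eq0) conj_w w_neq0. Qed.

Lemma zt_norm t : `|zt t| = 1.
Proof.
rewrite /zt normf_div -conj_w norm_conjC divff // normr_eq0 wp_neq0 //.
Qed.

Lemma zt_inj : injective zt.
Proof.
move=> s t; rewrite /zt => /eqP; rewrite eqr_div ?w_neq0 // => /eqP h.
have : (s%:R - t%:R) * (2 * 'i) = 0 :> C.
  have -> : (s%:R - t%:R) * (2 * 'i) = (1 + s%:R * 'i) * (1 - t%:R * 'i) - (1 + t%:R * 'i) * (1 - s%:R * 'i) :> C by ring.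
  by rewrite h subrr.
move/eqP; rewrite !mulf_eq0 (negbTE (neq0Ci _)) pnatr_eq0 orbF /= subr_eq0 eqr_nat.
by case: eqP => // ? _.
Qed.

Lemma poly_circle (p : {poly C}) : (forall z : C, `|z| = 1 -> p.[z] = 0) -> p = 0.
Proof.
move=> hp; apply/eqP; apply: contraT => nz.
have := @max_poly_roots _ p (map zt (iota 0 (size p))) nz.
rewrite size_map size_iota ltnn; apply.
  by apply/allP => z /mapP [t _ ->]; rewrite /root hp // zt_norm.
by rewrite map_inj_uniq ?iota_uniq //; exact: zt_inj.
Qed.
End Alg2.
Section Alg3.
Variable R : realType.
Local Notation C := (R[i]).

Definition Dm n N (Y X : int -> 'M[C]_n) (m : nat) : 'M[C]_n :=
  \sum_(k < N.*2.+1) \sum_(l < N.*2.+1)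
     (if m == (k + l)%N :> nat then Y (k%:Z - N%:Z) *m X (l%:Z - N%:Z) else 0).

Arguments Dm {n}.

Lemma sum_delta (m0 M : nat) (F : nat -> C) : (m0 < M)%N ->
  \sum_(m < M) (m == m0 :> nat)%:R * F m = F m0.
Proof.
move=> hm; rewrite (bigD1 (Ordinal hm)) //= eqxx mul1r big1 ?addr0 // => m.
by rewrite -val_eqE /= => /negbTE ->; rewrite mul0r.
Qed.

Lemma Dm_id n N (Y X : int -> 'M[C]_n) :
  (forall z : C, `|z| = 1 -> loop_eval N Y z *m loop_eval N X z = 1%:M) ->
  forall m, (m < (N.*2.+1).*2)%N -> Dm N Y X m = if m == N.*2 then 1%:M else 0.
Proof.
move=> hu m hm; apply/matrixP => i j.
pose p : {poly C} := \poly_(m < (N.*2.+1).*2) (Dm N Y X m i j - (m == N.*2)%:R * (i == j)%:R).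
have p0 : p = 0.
  apply: poly_circle => z hz.
  have z0 : z != 0 by apply/negP => /eqP z0; move: hz; rewrite z0 normr0 => /eqP; rewrite eq_sym oner_eq0.
  rewrite horner_poly.
  under eq_bigr do rewrite mulrBl.
  rewrite sumrB.
  under [X in _ - X]eq_bigr do rewrite -mulrA.
  rewrite (sum_delta _ _ (fun m => (i == j)%:R * z ^+ m)); last by rewrite -addnn; lia.
  apply/eqP; rewrite subr_eq0; apply/eqP.
  have e : \sum_(m < (N.*2.+1).*2) z ^+ m *: Dm N Y X m = z ^+ N.*2 *: 1%:M.
    rewrite -(hu z hz) loop_prod // -(@part_sum _ _ (fun m k l => z ^+ m *: (Y (k%:Z - N%:Z) *m X (l%:Z - N%:Z)))).
    apply: eq_bigr => m' _; rewrite /Dm scaler_sumr; apply: eq_bigr => k _.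
    rewrite scaler_sumr; apply: eq_bigr => l _.
    by case: ifP => _; rewrite ?scaler0.
  have := congr1 (fun M : 'M[C]_n => M i j) e.
  rewrite summxE /= !mxE mulrC => <-.
  by apply: eq_bigr => m' _; rewrite mxE mulrC.
have := congr1 (fun q : {poly C} => q`_m) p0.
rewrite coef_poly hm coef0 => /eqP; rewrite subr_eq0 => /eqP ->.
by case: eqP => _; rewrite !mxE ?mul1r ?mul0r.
Qed.
End Alg3.
Section Alg4.
Variable R : realType.
Local Notation C := (R[i]).

Lemma act_comp n N (Y X : int -> 'M[C]_n) :
  (forall z : C, `|z| = 1 -> loop_eval N Y z *m loop_eval N X z = 1%:M) ->
  forall b : seqH R n, loop_act N Y (loop_act N X b) = b.
Proof.
move=> hu b; apply/funext => p; rewrite /loop_act.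
have e1 : \sum_(k < N.*2.+1) Y (k%:Z - N%:Z) *m
      (\sum_(l < N.*2.+1) X (l%:Z - N%:Z) *m b (p + (k%:Z - N%:Z) + (l%:Z - N%:Z)))
   = \sum_(k < N.*2.+1) \sum_(l < N.*2.+1)
      (fun m k l => (Y (k%:Z - N%:Z) *m X (l%:Z - N%:Z)) *m b (p + m%:Z - (N.*2)%:Z)) (k + l)%N k l.
  apply: eq_bigr => k _; rewrite mulmx_sumr; apply: eq_bigr => l _.
  rewrite mulmxA /=; congr (_ *m b _).
  move: (nat_of_ord k) (nat_of_ord l) => x y; rewrite -addnn !PoszD; lia.
rewrite e1 -(@part_sum _ _ (fun m k l => (Y (k%:Z - N%:Z) *m X (l%:Z - N%:Z)) *m b (p + m%:Z - (N.*2)%:Z))).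
have e2 : forall m : 'I_(N.*2.+1).*2,
   \sum_(k < N.*2.+1) \sum_(l < N.*2.+1)
     (if m == (k + l)%N :> nat then (Y (k%:Z - N%:Z) *m X (l%:Z - N%:Z)) *m b (p + m%:Z - (N.*2)%:Z) else 0)
   = (if m == N.*2 :> nat then 1%:M else 0) *m b (p + m%:Z - (N.*2)%:Z).
  move=> m; rewrite -(@Dm_id _ _ _ _ _ hu _ (ltn_ord m)) /Dm mulmx_suml; apply: eq_bigr => k _.
  rewrite mulmx_suml; apply: eq_bigr => l _.
  by case: ifP => _; rewrite ?mul0mx.
rewrite (eq_bigr _ (fun m _ => e2 m)).
have hN : (N.*2 < (N.*2.+1).*2)%N by rewrite -addnn; lia.
rewrite (bigD1 (Ordinal hN)) //= eqxx mul1mx big1 ?addr0.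
  by congr b; lia.
by move=> m; rewrite -val_eqE /= => /negbTE ->; rewrite mul0mx.
Qed.
End Alg4.
Section Alg5.
Variable R : realType.
Local Notation C := (R[i]).

Definition conjB n (A : int -> 'M[C]_n) (q : int) : 'M[C]_n := (map_mx Num.conj (A (- q)))^T.

Arguments conjB {n}.

Lemma conj_loop n N (A : int -> 'M[C]_n) (z : C) : `|z| = 1 ->
  (map_mx Num.conj (loop_eval N A z))^T = loop_eval N (conjB A) z.
Proof.
move=> hz.
have z0 : z != 0 by apply/negP => /eqP z0; move: hz; rewrite z0 normr0 => /eqP; rewrite eq_sym oner_eq0.
have zc : z^* = z^-1 by rewrite invC_norm hz expr1n invr1 mul1r.
rewrite /loop_eval map_mx_sum linear_sum (reindex_inj rev_ord_inj) /=.
apply: eq_bigr => k _.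
rewrite map_mxZ linearZ /= /conjB.
have e : ((rev_ord k)%:Z - N%:Z) = - (k%:Z - N%:Z).
  rewrite /=; have := ltn_ord k; move: (nat_of_ord k) => x; rewrite -addnn => hx.
  rewrite subSS; lia.
rewrite e; congr (_ *: _).
have zu : z \is a GRing.unit by rewrite unitfE.
rewrite (rmorphXz _ _ zu).
have -> : Num.Num_conj__canonical__GRing_RMorphism (complex_complex__canonical__Num_ClosedField R) z = z^-1 by exact: zc.
by rewrite exprz_inv opprK.
Qed.
End Alg5.
Arguments conjB {R n}.
Section An1.
Variable R : realType.
Local Notation C := (R[i]).

Lemma sq_sum (K : nat) (x : 'I_K -> R) :
  (\sum_(k < K) x k) ^+ 2 <= K%:R * \sum_(k < K) x k ^+ 2.
Proof.
elim: K x => [|K IH] x; first by rewrite !big_ord0 expr0n /= mul0r.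
rewrite !big_ord_recr /=.
set S := \sum_(i < K) x (widen_ord _ i).
set T := \sum_(i < K) x (widen_ord _ i) ^+ 2.
set y := x ord_max.
have hS : S ^+ 2 <= K%:R * T by exact: (IH (fun i => x (widen_ord (leqnSn K) i))).
have hT : 0 <= T by apply: sumr_ge0 => i _; exact: sqr_ge0.
have hK : 0 <= K%:R :> R by exact: ler0n.
rewrite -natr1.
have h1 : 0 <= (K%:R * y - S) ^+ 2 by exact: sqr_ge0.
have [K0|Kp] := eqVneq K 0%N.
  have S0 : S = 0.
    by apply/eqP; rewrite -sqrf_eq0 eq_le sqr_ge0 andbT; move: hS; rewrite K0 mul0r.
  rewrite S0 K0 add0r add0r mul1r; nra.
have Kp' : 0 < K%:R :> R by rewrite ltr0n lt0n.
nra.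
Qed.

Lemma ReD (x y : C) : complex.Re (x + y) = complex.Re x + complex.Re y.
Proof. by case: x => a b; case: y => c d. Qed.
Lemma ImD (x y : C) : complex.Im (x + y) = complex.Im x + complex.Im y.
Proof. by case: x => a b; case: y => c d. Qed.

Lemma Re_sum K (w : 'I_K -> C) : complex.Re (\sum_(k < K) w k) = \sum_(k < K) complex.Re (w k).
Proof. by apply: (big_morph _ ReD). Qed.
Lemma Im_sum K (w : 'I_K -> C) : complex.Im (\sum_(k < K) w k) = \sum_(k < K) complex.Im (w k).
Proof. by apply: (big_morph _ ImD). Qed.

Lemma csq_ge0 (z : C) : 0 <= csq z.
Proof. by rewrite /csq addr_ge0 // sqr_ge0. Qed.

Lemma vsq_ge0 n (v : 'cV[C]_n) : 0 <= vsq v.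
Proof. by apply: sumr_ge0 => i _; exact: csq_ge0. Qed.

Lemma csqM (x y : C) : csq (x * y) = csq x * csq y.
Proof. by case: x => a b; case: y => c d; rewrite /csq /=; ring. Qed.

Lemma csq_sum K (w : 'I_K -> C) : csq (\sum_(k < K) w k) <= K%:R * \sum_(k < K) csq (w k).
Proof.
rewrite /csq Re_sum Im_sum big_split /= mulrDr.
by apply: lerD; apply: sq_sum.
Qed.

Lemma vsq_sum n K (v : 'I_K -> 'cV[C]_n) : vsq (\sum_(k < K) v k) <= K%:R * \sum_(k < K) vsq (v k).
Proof.
rewrite /vsq exchange_big mulr_sumr; apply: ler_sum => j _.
by rewrite summxE; apply: csq_sum.
Qed.

Definition mxc n (M : 'M[C]_n) : R := n%:R * \sum_(i < n) \sum_(j < n) csq (M i j).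

Arguments mxc {n}.

Lemma mxc_ge0 n (M : 'M[C]_n) : 0 <= mxc M.
Proof. by rewrite /mxc mulr_ge0 // sumr_ge0 // => i _; rewrite sumr_ge0 // => j _; exact: csq_ge0. Qed.

Lemma csq_le_vsq n (v : 'cV[C]_n) j : csq (v j 0) <= vsq v.
Proof.
rewrite /vsq (bigD1 j) //= lerDl; apply: sumr_ge0 => i _; exact: csq_ge0.
Qed.

Lemma vsq_mul n (M : 'M[C]_n) (v : 'cV[C]_n) : vsq (M *m v) <= mxc M * vsq v.
Proof.
rewrite /vsq /mxc -mulrA mulr_suml mulr_sumr; apply: ler_sum => i _.
rewrite mxE; apply: le_trans; first exact: csq_sum.
rewrite ler_wpM2l // mulr_suml; apply: ler_sum => j _.
rewrite csqM ler_wpM2l ?csq_ge0 //; exact: csq_le_vsq.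
Qed.
End An1.
Arguments mxc {R n}.
Section An2.
Variable R : realType.

Lemma ratio_bound (a : int -> R) (N : nat) : admissible_weight a ->
  exists L : R, 0 < L /\ forall (p j : int), (`|j| <= N)%N -> a p <= L * a (p + j).
Proof.
case=> apos asym _ [M hM].
set M' := `|M| + 1.
have M'1 : 1 <= M' by rewrite /M' lerDr normr_ge0.
have M'0 : 0 < M' by apply: lt_le_trans M'1.
have up p : a p <= M' * a (p + 1).
  have := hM p; rewrite ler_pdivrMr // => h; apply: le_trans h _.
  rewrite ler_pM2r //.
  by rewrite /M'; apply: le_trans (ler_norm M) _; rewrite lerDl ler01.
have down p : a p <= M' * a (p - 1).
  have e : a (- p + 1) = a (p - 1) by rewrite asym opprD opprK.
  by rewrite asym -e up.
have ind (m : nat) p : a p <= M' ^+ m * a (p + m%:Z) /\ a p <= M' ^+ m * a (p - m%:Z).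
  elim: m p => [|m IH] p; first by rewrite expr0 !mul1r; split; [have -> : p + 0%:Z = p by lia | have -> : p - 0%:Z = p by lia].
  case: (IH p) => h1 h2; split.
    apply: (le_trans h1); rewrite exprSr -mulrA ler_pM2l ?exprn_gt0 //.
    by have -> : p + m.+1%:Z = p + m%:Z + 1 by lia.
  apply: (le_trans h2); rewrite exprSr -mulrA ler_pM2l ?exprn_gt0 //.
  by have -> : p - m.+1%:Z = p - m%:Z - 1 by lia.
exists (M' ^+ N); split; first by rewrite exprn_gt0.
move=> p j hj.
case: j hj => [m|m] hj.
  case: (ind m p) => h _; apply: (le_trans h); rewrite ler_pM2r //.
  exact: ler_weXn2l.
case: (ind m.+1 p) => _ h; rewrite NegzE; apply: (le_trans h); rewrite ler_pM2r //.
exact: ler_weXn2l.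
Qed.
End An2.
Section An3.
Variable R : realType.
Local Open Scope ereal_scope.

Lemma esumZ_le (T : choiceType) (S : set T) (c : R) (f : T -> \bar R) :
  (0 <= c)%R -> (forall x, 0 <= f x) ->
  \esum_(x in S) (c%:E * f x) <= c%:E * \esum_(x in S) f x.
Proof.
move=> c0 f0; apply: ge_ereal_sup => _ [X [finX XS] <-].
rewrite -ge0_mule_fsumr //; apply: lee_wpmul2l; first by rewrite lee_fin.
by apply: esum_ge; exists X.
Qed.

Lemma esum_fin_supp (T : choiceType) (I : finType) (g : I -> T) (f : T -> \bar R) :
  (forall x, 0 <= f x) -> (forall x, f x < +oo) ->
  (forall x, ~ (range g) x -> f x = 0) ->
  \esum_(x in [set: T]) f x < +oo.
Proof.
move=> f0 ffin fz.
rewrite (esumID (range g)) //.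
rewrite [X in _ + X]esum1 ?adde0; last by move=> x [_ /= h]; exact: fz.
rewrite setTI esum_fset //; last by apply: finite_image; exact: finite_finset.
rewrite fsbig_finite /=; last by apply: finite_image; exact: finite_finset.
by apply: (big_ind (fun x => x < +oo)) => // x y; exact: lte_add_pinfty.
Qed.
End An3.
Section An4.
Variable R : realType.
Local Notation C := (R[i]).

Lemma sh_bound (N : nat) (k : 'I_N.*2.+1) : (`|k%:Z - N%:Z| <= N)%N.
Proof. have := ltn_ord k; move: (nat_of_ord k) => x; rewrite -addnn => hx; lia. Qed.

Lemma loop_bounded (a : int -> R) n N (Y : int -> 'M[C]_n) :
  admissible_weight a -> bounded_op a (loop_act N Y).
Proof.
move=> ha; have [L [L0 hL]] := @ratio_bound R a N ha.
have apos : forall p, (0 < a p)%R by case: ha.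
set K := N.*2.+1.
set c := (K%:R * \sum_(k < K) mxc (Y (k%:Z - N%:Z)))%R.
have c0 : (0 <= c)%R by rewrite mulr_ge0 // sumr_ge0 // => k _; exact: mxc_ge0.
exists (c * L * K%:R)%R => b _.
have pt p : (a p * vsq (loop_act N Y b p) <=
   c * L * \sum_(k < K) (a (p + (k%:Z - N%:Z)) * vsq (b (p + (k%:Z - N%:Z)))))%R.
  apply: (@le_trans _ _ (a p * (c * \sum_(k < K) vsq (b (p + (k%:Z - N%:Z)))))%R).
    rewrite ler_pM2l //; apply: le_trans; first exact: vsq_sum.
    rewrite /c -mulrA; apply: ler_wpM2l; first by [].
    rewrite mulr_sumr; apply: ler_sum => k _.
    apply: le_trans; first exact: vsq_mul.
    apply: ler_wpM2r; first exact: vsq_ge0.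
    by rewrite (bigD1 k) //= lerDl sumr_ge0 // => i _; exact: mxc_ge0.
  rewrite mulrCA -mulrA; apply: ler_wpM2l; first by [].
  rewrite mulr_sumr mulr_sumr; apply: ler_sum => k _.
  rewrite mulrA; apply: ler_wpM2r; first exact: vsq_ge0.

  exact: hL (sh_bound _ k).
rewrite /wnorm2.
apply: le_trans.
  apply: (@le_esum _ _ [set: int] _ (fun p => ((c * L) * \sum_(k < K) (a (p + (k%:Z - N%:Z)) * vsq (b (p + (k%:Z - N%:Z)))))%:E)%R).
  by move=> p _; rewrite lee_fin; exact: pt p.
under eq_esum do rewrite EFinM.
apply: le_trans.
  apply: (@esumZ_le R int [set: int] (c * L) (fun p => (\sum_(k < K) (a (p + (k%:Z - N%:Z)) * vsq (b (p + (k%:Z - N%:Z)))))%:E)).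
  - by rewrite mulr_ge0 // ltW.
  - move=> p; rewrite lee_fin; apply: sumr_ge0 => k _; rewrite mulr_ge0 ?vsq_ge0 // ltW //.
rewrite (EFinM (c * L)) -muleA; apply: lee_wpmul2l; first by rewrite lee_fin mulr_ge0 // ltW.
under eq_esum do rewrite -sumEFin.
rewrite esum_sum; last by move=> p k _ _; rewrite lee_fin mulr_ge0 ?vsq_ge0 // ltW.
have e : forall k : 'I_K, \esum_(p in [set: int]) (a (p + (k%:Z - N%:Z)) * vsq (b (p + (k%:Z - N%:Z))))%:E
   = \esum_(p in [set: int]) (a p * vsq (b p))%:E.
  move=> k; rewrite [RHS](reindex_esum [set: int] [set: int] (fun p => p + (k%:Z - N%:Z))) //.
  rewrite setTT_bijective; exists (fun p => p - (k%:Z - N%:Z)) => p /=; lia.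
rewrite (eq_bigr _ (fun k _ => e k)) sumr_const card_ord mule_natl.
by [].
Qed.
End An4.
Section An5.
Variable R : realType.
Local Notation C := (R[i]).

Definition sgnJ (q : int) : C := if (0 < q)%R then 'i else - 'i.

Lemma commJ_expand n N (Y : int -> 'M[C]_n) (b : seqH R n) p :
  commJ (loop_act N Y) b p =
  \sum_(k < N.*2.+1) (sgnJ (p + (k%:Z - N%:Z)) - sgnJ p) *: (Y (k%:Z - N%:Z) *m b (p + (k%:Z - N%:Z))).
Proof.
rewrite /commJ /loop_act /Jop scaler_sumr -sumrB; apply: eq_bigr => k _.
by rewrite scalerBl -scalemxAr.
Qed.

Lemma vsq0 n : vsq (0 : 'cV[C]_n) = 0.
Proof. by rewrite /vsq big1 // => i _; rewrite mxE /csq /= expr0n addr0. Qed.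

Lemma ebasis_zero n p0 (j : 'I_n) q : q != p0 -> @ebasis R n p0 j q = 0.
Proof. by rewrite /ebasis => /negbTE ->. Qed.

Lemma loop_HS (a : int -> R) n N (Y : int -> 'M[C]_n) :
  admissible_weight a -> hilbert_schmidt a (commJ (loop_act N Y)).
Proof.
move=> ha; have apos : forall p, (0 < a p)%R by case: ha.
set K := N.*2.+1.
have wge0 : forall b : seqH R n, (0 <= wnorm2 a b)%E.
  move=> b; apply: esum_ge0 => p _; rewrite lee_fin mulr_ge0 ?vsq_ge0 // ltW //.
rewrite /hilbert_schmidt.
apply: (@esum_fin_supp R _ _ (fun x : 'I_K * 'I_n => (x.1%:Z - N%:Z, x.2))).
- move=> x; apply: mule_ge0; last exact: wge0.
  by rewrite lee_fin invr_ge0 ltW.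
- move=> [p0 j]; apply: lte_mul_pinfty; first by rewrite lee_fin invr_ge0 ltW.
    by [].
  rewrite /wnorm2; apply: (@esum_fin_supp R _ _ (fun k : 'I_K => p0 - (k%:Z - N%:Z))).
  + by move=> p; rewrite lee_fin mulr_ge0 ?vsq_ge0 // ltW.
  + by move=> p; exact: ltry.
  + move=> p hp; rewrite commJ_expand big1 ?vsq0 ?mulr0 // => k _.
    rewrite ebasis_zero ?mulmx0 ?scaler0 //; apply/negP => /eqP e.
    apply: hp; exists k => //=; move: e => /= <-; by rewrite addrK.
- move=> [p0 j] hr; rewrite /wnorm2 esum1 ?mule0 // => p _.
  have hN : (N < `|p0|)%N.
    rewrite ltnNge; apply/negP => h; apply: hr.
    have hk : (absz (p0 + N%:Z)%R < K)%N.
      have key : forall q : int, (`|q| <= N)%N -> (absz (q + N%:Z)%R < N.*2.+1)%N by move=> q; rewrite -addnn; lia.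
      exact: key h.
    exists (Ordinal hk, j) => //=; congr pair.
    have key : forall q : int, (`|q| <= N)%N -> (`|(q + N%:Z)%R|%N)%:Z - N%:Z = q by move=> q; lia.
    exact: key h.
  rewrite commJ_expand big1 ?vsq0 ?mulr0 // => k _.
  have [e|ne] := eqVneq (p + (k%:Z - N%:Z)) p0; last by rewrite ebasis_zero ?mulmx0 ?scaler0.
  have hs := sh_bound _ k.
  have -> : sgnJ (p + (k%:Z - N%:Z)) = sgnJ p.
    have key : forall (q p1 s : int), (N < `|q|)%N -> (`|s| <= N)%N -> p1 + s = q -> (0 < p1 + s)%R = (0 < p1)%R.
      by move=> q p1 s h1 h2 h3; apply/idP/idP => h; lia.
    by rewrite /sgnJ (key p0 p (k%:Z - N%:Z) hN hs e).
  by rewrite subrr scale0r.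
Qed.
End An5.

Theorem mainTheorem19 (R : realType) (a : int -> R) (n : nat)
  (ha : admissible_weight a) (N : nat) (A : int -> 'M[R[i]]_n)
  (hA : in_LpolU N A) :
  in_GL_J a (loop_act N A).
Proof.
case: hA => _ hU.
have PQ : forall z : R[i], `|z| = 1 -> loop_eval N A z *m loop_eval N (conjB A) z = 1%:M.
  by move=> z hz; rewrite -conj_loop //; exact: hU z hz.
have QP : forall z : R[i], `|z| = 1 -> loop_eval N (conjB A) z *m loop_eval N A z = 1%:M.
  by move=> z hz; apply: mulmx1C; exact: PQ.
split.
- exact: loop_bounded.
- exists (loop_act N (conjB A)); split; first exact: loop_bounded.
  by move=> b _; split; [exact: act_comp QP b | exact: act_comp PQ b].
- exact: loop_HS.
Qed.
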